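(* Let $R$ be an associative ring with identity and $M$ a left $R$-module which is projective in $\sigma[M]$. Let $\mu\colon\Lambda^{fi}(M)\to\Lambda^{fi}(M)$ be given by $\mu(N)=\sum\{K\in\Lambda^{fi}(M)\mid \mathcal{U}(K)\subseteq\mathcal{U}(N)\}$. Then for $N\in\Lambda^{fi}(M)$, $\mu(N)=N$ if and only if $N$ is semiprime in $M$ or $N=M$.
   Context: $\Lambda^{fi}(M)$ is the set of fully invariant submodules of $M$. For $N,L\leq M$, $N_ML=\sum\{f(N)\mid f\in\mathrm{Hom}_R(M,L)\}$. $LgSpec(M)$ is the set of submodules $P\neq M$ such that for all $N,L\in\Lambda^{fi}(M)$, $N_ML\subseteq P$ implies $N\subseteq P$ or $L\subseteq P$; for $N\in\Lambda^{fi}(M)$, $\mathcal{U}(N)=\{P\in LgSpec(M)\mid N\nsubseteq P\}$. A submodule $N\in\Lambda^{fi}(M)$ with $N\neq M$ is semiprime in $M$ if whenever $K\in\Lambda^{fi}(M)$ and $K_MK\subseteq N$, then $K\subseteq N$. *)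

(* Defs.v *)
From HB Require Import structures.
From mathcomp Require Import all_boot all_algebra.
Set Implicit Arguments. Unset Strict Implicit. Unset Printing Implicit Defensive.
Import GRing.Theory.
Local Open Scope ring_scope.

(* R : an associative ring with identity (pzRingType); left R-modules are lmodType R.
   Submodules are represented as predicates M -> Prop. *)

Section Modules.
Variable R : pzRingType.

Definition subset_ (M : lmodType R) (A B : M -> Prop) := forall x, A x -> B x.
Definition seteq_ (M : lmodType R) (A B : M -> Prop) := forall x, A x <-> B x.
Definition full_ (M : lmodType R) (A : M -> Prop) := forall x : M, A x.

Definition is_submod (M : lmodType R) (N : M -> Prop) : Prop :=
  [/\ N 0, (forall x y, N x -> N y -> N (x + y)) & (forall (r : R) x, N x -> N (r *: x))].

Definition sum_fam (M : lmodType R) (F : (M -> Prop) -> Prop) : M -> Prop :=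
  fun x => exists s : seq M,
    (forall y, y \in s -> exists K, F K /\ K y) /\ x = \sum_(y <- s) y.

Definition img (X Y : lmodType R) (f : X -> Y) (N : X -> Prop) : Y -> Prop :=
  fun y => exists x, N x /\ y = f x.

Definition fully_inv (M : lmodType R) (N : M -> Prop) : Prop :=
  is_submod N /\ forall f : M -> M, linear f -> subset_ (img f N) N.

(* N_M L = sum { f(N) | f in Hom_R(M, L) } *)
Definition prodM (M : lmodType R) (N L : M -> Prop) : M -> Prop :=
  sum_fam (fun K => exists f : M -> M,
     [/\ linear f, (forall x, L (f x)) & seteq_ K (img f N)]).

Definition LgSpec (M : lmodType R) (P : M -> Prop) : Prop :=
  [/\ is_submod P, ~ full_ P &
     forall N L, fully_inv N -> fully_inv L ->
       subset_ (prodM N L) P -> subset_ N P \/ subset_ L P].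

Definition U_ (M : lmodType R) (N : M -> Prop) : (M -> Prop) -> Prop :=
  fun P => LgSpec P /\ ~ subset_ N P.

Definition semiprime (M : lmodType R) (N : M -> Prop) : Prop :=
  [/\ fully_inv N, ~ full_ N &
     forall K, fully_inv K -> subset_ (prodM K K) N -> subset_ K N].

Definition mu (M : lmodType R) (N : M -> Prop) : M -> Prop :=
  sum_fam (fun K => fully_inv K /\ forall P, U_ K P -> U_ N P).

Definition M_generated (M Y : lmodType R) : Prop :=
  full_ (sum_fam (fun K : Y -> Prop => exists f : M -> Y,
            linear f /\ seteq_ K (img f (fun _ => True)))).

(* X in sigma[M]: X is isomorphic to a submodule of an M-generated module,
   i.e. X embeds (injective linear map) into an M-generated module. *)
Definition in_sigma (M X : lmodType R) : Prop :=
  exists (Y : lmodType R) (e : X -> Y), [/\ linear e, injective e & M_generated M Y].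

Definition proj_in_sigma (M : lmodType R) : Prop :=
  forall (X Y : lmodType R), in_sigma M X -> in_sigma M Y ->
  forall (g : X -> Y), linear g -> (forall y, exists x, g x = y) ->
  forall (f : M -> Y), linear f ->
  exists h : M -> X, linear h /\ forall m, g (h m) = f m.

End Modules.

(* Main.v *)
From HB Require Import structures.
Require Import Defs.
From mathcomp Require Import all_boot all_algebra.
From mathcomp Require Import boolp classical_sets.
Set Implicit Arguments. Unset Strict Implicit. Unset Printing Implicit Defensive.
Import GRing.Theory.
Local Open Scope ring_scope.

Section SubMod.
Variables (R : pzRingType) (M : lmodType R) (S : M -> Prop) (hS : is_submod S).
Definition subP : pred M := fun x => let _ := hS in `[< S x >].
Definition subm := {x : M | subP x}.
HB.instance Definition _ := SubType.copy subm {x : M | subP x}.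
HB.instance Definition _ := Choice.copy subm {x : M | subP x}.
Lemma subP_closed : subsemimod_closed subP.
Proof.
case: hS => h0 hD hZ; split; [split|].
- by apply/asboolP.
- by rewrite /subP => x y /asboolP ? /asboolP ?; apply/asboolP; auto.
- by rewrite /subP => a x /asboolP ?; apply/asboolP; auto.
Qed.
HB.instance Definition _ := GRing.SubChoice_isSubLmodule.Build R M subP subm subP_closed.
Lemma subvalP (u : subm) : S (val u).
Proof. exact/asboolP/(valP u). Qed.
Lemma valL (a : R) (u v : subm) : val (a *: u + v) = a *: val u + val v.
Proof. by rewrite linearP. Qed.
Lemma mkP x : S x -> subP x.
Proof. by move=> h; apply/asboolP. Qed.
End SubMod.

Section Lin.
Variables (R : pzRingType) (X Y : lmodType R) (f : X -> Y) (hf : linear f).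
Lemma lin0 : f 0 = 0.
Proof.
have := hf 1 0 0; rewrite !scale1r addr0 => h.
have : f 0 + f 0 - f 0 = f 0 - f 0 by rewrite -h.
by rewrite addrK subrr.
Qed.
Lemma linD x y : f (x + y) = f x + f y.
Proof. by have := hf 1 x y; rewrite !scale1r. Qed.
Lemma linZ a x : f (a *: x) = a *: f x.
Proof. by have := hf a x 0; rewrite !addr0 lin0 addr0. Qed.
End Lin.

Section Main.
Variables (R : pzRingType) (M : lmodType R).
Implicit Types (A B N K P L : M -> Prop).

Definition plus A B : M -> Prop := fun x => exists a b, [/\ A a, B b & x = a + b].

Lemma sum_in (S : M -> Prop) (s : seq M) : is_submod S ->
  (forall y, y \in s -> S y) -> S (\sum_(y <- s) y).
Proof.
case=> h0 hD _; elim: s => [|y s IH] H; first by rewrite big_nil.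
rewrite big_cons; apply: hD; first by apply: H; rewrite inE eqxx.
by apply: IH => z hz; apply: H; rewrite inE hz orbT.
Qed.

Lemma sum_fam_sub (F : (M -> Prop) -> Prop) S : is_submod S ->
  (forall K, F K -> subset_ K S) -> subset_ (sum_fam F) S.
Proof.
move=> hS hF x [s [hs ->]]; apply: sum_in => // y /hs [K [FK Ky]].
exact: hF FK _ Ky.
Qed.

Lemma sum_fam_mem (F : (M -> Prop) -> Prop) K x : F K -> K x -> sum_fam F x.
Proof.
move=> FK Kx; exists [:: x]; split; last by rewrite big_seq1.
by move=> y; rewrite inE => /eqP ->; exists K.
Qed.

Lemma sum_fam_mono (F G : (M -> Prop) -> Prop) :
  (forall K, F K -> exists K', G K' /\ subset_ K K') ->
  subset_ (sum_fam F) (sum_fam G).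
Proof.
move=> H x [s [hs ->]]; exists s; split => // y /hs [K [FK Ky]].
by have [K' [GK' KK']] := H K FK; exists K'; split => //; apply: KK'.
Qed.

Lemma prodM_subR K L : is_submod L -> subset_ (prodM K L) L.
Proof.
move=> hL; apply: sum_fam_sub => // K0 [f [hf fL eK]] x /eK [y [_ ->]].
exact: fL.
Qed.

Lemma prodM_subL K L : fully_inv K -> subset_ (prodM K L) K.
Proof.
move=> [hK fK]; apply: sum_fam_sub => // K0 [f [hf fL eK]] x /eK hx.
exact: (fK f hf).
Qed.

Lemma prodM_mono K K' L L' : subset_ K K' -> subset_ L L' ->
  subset_ (prodM K L) (prodM K' L').
Proof.
move=> hK hL; apply: sum_fam_mono => K0 [f [hf fL eK]].
exists (img f K'); split.
  by exists f; split => // x; exact: hL (fL x).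
by move=> x /eK [y [Ky ->]]; exists y; split => //; apply: hK.
Qed.

Lemma plus_submod A B : is_submod A -> is_submod B -> is_submod (plus A B).
Proof.
case=> a0 aD aZ [b0 bD bZ]; split.
- by exists 0, 0; rewrite addr0.
- move=> x y [a [b [Aa Bb ->]]] [a' [b' [Aa' Bb' ->]]].
  by exists (a + a'), (b + b'); split; auto; rewrite addrACA.
- move=> r x [a [b [Aa Bb ->]]]; exists (r *: a), (r *: b); split; auto.
  by rewrite scalerDr.
Qed.

Lemma plus_fi A B : fully_inv A -> fully_inv B -> fully_inv (plus A B).
Proof.
case=> hA fA [hB fB]; split; first exact: plus_submod.
move=> f hf y [x [[a [b [Aa Bb ex]]] ey]]; subst.
by exists (f a), (f b); split; [apply: (fA f hf); exists a | apply: (fB f hf); exists b | exact: linD].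

Qed.

Lemma M_gen_self : M_generated M M.
Proof.
move=> x; exists [:: x]; split; last by rewrite big_seq1.
move=> y; rewrite inE => /eqP ->; exists (img id (fun _ => True)); split.
  by exists id; split => // a u v.
by exists x.
Qed.

Lemma M_gen_pair : M_generated M (M * M)%type.
Proof.
move=> [x y]; exists [:: (x, 0); (0, y)]; split; last first.
  by rewrite big_cons big_seq1 /=; congr (_, _); rewrite ?addr0 ?add0r.
move=> z; rewrite !inE => /orP [] /eqP ->.
- exists (img (fun m : M => (m, 0 : M)) (fun _ => True)); split; last by exists x.
  exists (fun m : M => (m, 0 : M)); split => //.
  by move=> a u v; change (((a *: u + v, 0) : M * M) = (a *: u + v, a *: (0:M) + 0)); rewrite scaler0 addr0.
- exists (img (fun m : M => (0 : M, m)) (fun _ => True)); split; last by exists y.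
  exists (fun m : M => (0 : M, m)); split => //.
  by move=> a u v; change (((0, a *: u + v) : M * M) = (a *: (0:M) + 0, a *: u + v)); rewrite scaler0 addr0.
Qed.

Lemma decomp (hpr : proj_in_sigma M) B P (hB : is_submod B) (hP : is_submod P)
  (f : M -> M) : linear f -> (forall x, plus B P (f x)) ->
  exists g h : M -> M, [/\ linear g, linear h, (forall x, B (g x)),
     (forall x, P (h x)) & forall x, f x = g x + h x].
Proof.
move=> hf hfBP.
have hBP := plus_submod hB hP.
pose X := (subm hB * subm hP)%type.
pose Y := subm hBP.
have gP : forall z : X, subP hBP (val z.1 + val z.2).
  move=> z; apply: mkP; exists (val z.1), (val z.2); split => //;
  exact: subvalP.
pose gm : X -> Y := fun z => exist (subP hBP) _ (gP z).
have lin_gm : linear gm.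
  move=> a u v; apply: val_inj => /=.
  by rewrite scalerDr addrACA.
have sur : forall y : Y, exists x : X, gm x = y.
  move=> y; have := subvalP y => -[b [p [Bb Pp e]]].
  exists (exist (subP hB) b (mkP hB Bb), exist (subP hP) p (mkP hP Pp)).
  by apply: val_inj => /=; rewrite e.
pose f' : M -> Y := fun m => exist (subP hBP) (f m) (mkP hBP (hfBP m)).
have lin_f' : linear f'.
  by move=> a u v; apply: val_inj => /=; rewrite hf.
have sX : in_sigma M X.
  exists (M * M)%type, (fun z : X => (val z.1, val z.2)); split.
  - by [].
  - move=> [u1 u2] [v1 v2] /= [/val_inj -> /val_inj ->] //.
  - exact: M_gen_pair.
have sY : in_sigma M Y.
  exists M, val; split; [by move=> a u v; rewrite valL | exact: val_inj | exact: M_gen_self].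
have [h' [hh' eh']] := hpr X Y sX sY gm lin_gm sur f' lin_f'.
exists (fun m => val (h' m).1), (fun m => val (h' m).2); split.
- by move=> a u v /=; rewrite hh'.
- by move=> a u v /=; rewrite hh'.
- by move=> x; apply: subvalP.
- by move=> x; apply: subvalP.
- by move=> x; have := congr1 val (eh' x) => /= <-.
Qed.

Lemma key (hpr : proj_in_sigma M) A B P : is_submod A -> is_submod B ->
  fully_inv P -> subset_ (prodM A B) P ->
  subset_ (prodM (plus A P) (plus B P)) P.
Proof.
move=> hA hB [hP fP] hAB.
apply: sum_fam_sub => // K0 [f [hf fL eK]] x /eK [y [[a [p [Aa Pp ->]]] ->]].
have [g [h [hg hh gB hP' efgh]]] := decomp hpr hB hP hf fL.
rewrite (linD hf) efgh.
case: hP => p0 pD pZ.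
apply: (pD); last by apply: (fP f hf); exists p.
apply: (pD); last exact: hP'.
apply: hAB; apply: (@sum_fam_mem _ (img g A)); last by exists a.
by exists g; split => // z; split => -[w [Aw ->]]; exists w.
Qed.

Definition gen (x : M) : M -> Prop := fun y => forall Q, fully_inv Q -> Q x -> Q y.

Lemma gen_fi x : fully_inv (gen x).
Proof.
split; first split.
- by move=> Q [[q0 _ _] _].
- by move=> u v hu hv Q hQ Qx; have [[_ qD _] _] := hQ; apply: qD; [exact: hu | exact: hv].
- by move=> r u hu Q hQ Qx; have [[_ _ qZ] _] := hQ; apply: qZ; exact: hu.
move=> f hf y [u [hu ey]] Q hQ Qx; subst y; have [_ fQ] := hQ.
by apply: (fQ f hf); exists u; split => //; apply: hu.
Qed.

Lemma gen_self x : gen x x.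
Proof. by move=> Q. Qed.

Lemma gen_min x Q : fully_inv Q -> Q x -> subset_ (gen x) Q.
Proof. by move=> hQ Qx y; apply. Qed.


Definition Fam (N : M -> Prop) (s : nat -> M) (A : M -> Prop) :=
  [/\ fully_inv A, subset_ N A & forall n, ~ A (s n)].

Lemma prime_exists (hpr : proj_in_sigma M) N K : semiprime N -> fully_inv K ->
  ~ subset_ K N -> exists P, [/\ LgSpec P, subset_ N P & ~ subset_ K P].
Proof.
move=> [fiN nfN spN] fiK nKN.
have step : forall x : {x : M | ~ N x}, exists y : {y : M | ~ N y},
    prodM (gen (sval x)) (gen (sval x)) (sval y).
  move=> [x nx] /=; apply: contrapT => H; apply: nx.
  have : subset_ (gen x) N.
    apply: spN; first exact: gen_fi.
    move=> z hz; apply: contrapT => nz; apply: H; by exists (exist _ z nz).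
  by apply; exact: gen_self.
pose st x := sval (cid (step x)).
have stP x : prodM (gen (sval x)) (gen (sval x)) (sval (st x)) := svalP (cid (step x)).
have [x0 [Kx0 nx0]] : exists x, K x /\ ~ N x.
  apply: contrapT => H; apply: nKN => x Kx; apply: contrapT => nx; apply: H.
  by exists x.
pose s n := iter n st (exist _ x0 nx0).
have gdec : forall n, subset_ (gen (sval (s n.+1))) (gen (sval (s n))).
  move=> n; apply: gen_min; first exact: gen_fi.
  apply: (prodM_subR (gen_fi _).1); exact: stP.
have gmono : forall i k, (i <= k)%N -> subset_ (gen (sval (s k))) (gen (sval (s i))).
  move=> i k lik; rewrite -(subnK lik); elim: (k - i)%N => [|d IH] y hy //.
  by rewrite addSn in hy; exact: IH _ (gdec _ _ hy).
pose sv n := sval (s n).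
have chain : forall F : set (set M), (F `<=` (fun A => Fam N sv A \/ A = set0))%classic ->
    total_on F subset ->
    (fun A => Fam N sv A \/ A = set0) (\bigcup_(X in F) X)%classic.
  move=> F FP Ftot.
  have memF : forall Y, F Y -> (exists y, Y y) -> Fam N sv Y.
    move=> Y FY [y Yy]; case: (FP Y FY) => // eY; by rewrite eY in Yy.
  have [[x1 [X FX Xx1]]|ne] := pselect (exists x, (\bigcup_(X in F) X)%classic x); last first.
    right; apply: funext => x; apply: propext; split => // h; apply: ne; by exists x.
  left; have [[[X0 XD XZ] fX] NX _] := memF X FX (ex_intro _ x1 Xx1).
  split; first split; first split.
  - by exists X.
  - move=> u v [X1 FX1 hu] [X2 FX2 hv].
    case: (Ftot X1 X2 FX1 FX2) => sub.
    + have [[[_ D2 _] _] _ _] := memF X2 FX2 (ex_intro _ v hv).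
      by exists X2 => //; apply: D2 => //; apply: sub.
    + have [[[_ D1 _] _] _ _] := memF X1 FX1 (ex_intro _ u hu).
      by exists X1 => //; apply: D1 => //; apply: sub.
  - move=> r u [X1 FX1 hu].
    have [[[_ _ Z1] _] _ _] := memF X1 FX1 (ex_intro _ u hu).
    by exists X1 => //; apply: Z1.
  - move=> f hf y [u [[X1 FX1 hu] ->]].
    have [[_ f1] _ _] := memF X1 FX1 (ex_intro _ u hu).
    by exists X1 => //; apply: (f1 f hf); exists u.
  - by move=> y Ny; exists X => //; apply: NX.
  - move=> n [Y FY hY].
    have [_ _ av] := memF Y FY (ex_intro _ _ hY).
    exact: av hY.
have [A [PA maxA]] := Zorn_bigcup chain.
have [fiA NA avA] : Fam N sv A.
  case: PA => // eA; exfalso; apply: (maxA N).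
    split; first by move=> x; rewrite eA.
    move=> h; have := h 0; rewrite eA; apply; by case: fiN => -[].
  left; split; [exact: fiN | by move=> x | move=> n; exact: (svalP (s n))].
exists A; split => //; last first.
  by move=> h; apply: (avA 0%N); apply: h.
split; first exact: fiA.1.
  by move=> h; apply: (avA 0%N); apply: h.
move=> B C fiB fiC hBC; apply: contrapT => /not_orP [nB nC].
have exn : forall B, fully_inv B -> ~ subset_ B A -> exists n, plus B A (sv n).
  move=> B0 fiB0 nBA; apply: contrapT => H.
  have FBA : Fam N sv (plus B0 A).
    split; first exact: plus_fi.
      move=> x Nx; exists 0, x; split; [by case: fiB0 => -[] | exact: NA | by rewrite add0r].
    by move=> n hn; apply: H; exists n.
  apply: (maxA (plus B0 A)); last by left.
  split.
    move=> x Ax; exists 0, x; split; [by case: fiB0 => -[] | exact: Ax | by rewrite add0r].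
  move=> h; apply: nBA => x Bx; apply: h; exists x, 0; split => //; last by rewrite addr0.
  by case: fiA => -[].
have [n hn] := exn B fiB nB.
have [m hm] := exn C fiC nC.
pose k := maxn n m.
have hk1 : subset_ (gen (sv k)) (plus B A).
  move=> y hy; apply: (gen_min (plus_fi fiB fiA) hn); exact: (gmono n k (leq_maxl n m) y hy).
have hk2 : subset_ (gen (sv k)) (plus C A).
  move=> y hy; apply: (gen_min (plus_fi fiC fiA) hm); exact: (gmono m k (leq_maxr n m) y hy).
apply: (avA k.+1); apply: (key hpr fiB.1 fiC.1 fiA hBC).
apply: (prodM_mono hk1 hk2); exact: stP.
Qed.

End Main.

Theorem proposition4p24 (R : pzRingType) (M : lmodType R) :
  proj_in_sigma M ->
  forall N : M -> Prop, fully_inv N ->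
    (seteq_ (mu N) N <-> semiprime N \/ full_ N).
Proof.
move=> hpr N fiN.
have Nmu : subset_ N (mu N).
  move=> x Nx; apply: (sum_fam_mem (K := N)) => //; split => //.
have [hN fN] := fiN.
split.
- move=> eq; have [fullN|nfull] := pselect (full_ N); first by right.
  left; split => // K fiK hKK.
  move=> x Kx; apply/eq; apply: (sum_fam_mem (K := K)) => //; split => //.
  move=> P [LP nKP]; split => // NP.
  have [hP _ prP] := LP.
  have : subset_ (prodM K K) P by move=> y /hKK; apply: NP.
  by case/(prP _ _ fiK fiK).
- move=> H x; split; last exact: Nmu.
  apply: sum_fam_sub => // K [fiK UKN].
  case: H => [spN|fullN]; last by move=> y _; apply: fullN.
  move=> y Ky; apply: contrapT => nNy.
  have [P [LP NP nKP]] := prime_exists hpr spN fiK (fun h => nNy (h y Ky)).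
  by have [_ []] := UKN P (conj LP nKP).
Qed.
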